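(* Let $M\in\mathbb{R}^{n\times n}$ be a P$_s$-matrix, $q\in\mathbb{R}^n$ and $r\ge2$. Then for every $\gamma\ge0$ the level set $$\mathcal{L}_s(f_r,\gamma):=\{x\in S: f_r(x)\le\gamma\}$$ is bounded. Moreover, $\mathrm{sol}(M,q)\cap S\subseteq\operatorname{argmin}_{x\in S}f_r(x)$, and both of these sets are bounded.
   Context: $f_r(x)=\frac1r\big[\langle x_+^r,(Mx+q)_+^r\rangle+\|x_-\|_r^r+\|(Mx+q)_-\|_r^r\big]$ with $a_+=\max\{a,0\}$, $a_-=\min\{a,0\}$ componentwise, $x_+^r$ the componentwise $r$th power of $x_+$, $\|z\|_r^r=\sum_i|z_i|^r$. $S=\{x\in\mathbb{R}^n:\|x\|_0\le s\}$ ($\|x\|_0$ = number of nonzero entries). $\mathrm{sol}(M,q)=\{x: x\ge0,\ Mx+q\ge0,\ \langle x,Mx+q\rangle=0\}$. A P$_s$-matrix is a square matrix all of whose principal minors of order up to $s$ are positive. *)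

(* Defs.v *)
From HB Require Import structures.
From mathcomp Require Import all_boot all_order all_algebra.
From mathcomp Require Import all_classical all_reals all_analysis.
Set Implicit Arguments. Unset Strict Implicit. Unset Printing Implicit Defensive.
Import Order.TTheory GRing.Theory Num.Theory.
Import numFieldNormedType.Exports.
Local Open Scope classical_set_scope.
Local Open Scope ring_scope.

Definition posp (R : realType) (a : R) : R := Num.max a 0.
Definition negp (R : realType) (a : R) : R := Num.min a 0.

Definition affF (R : realType) (n : nat) (M : 'M[R]_n) (q : 'cV[R]_n)
  (x : 'cV[R]_n) : 'cV[R]_n := M *m x + q.

Definition f_r (R : realType) (n : nat) (M : 'M[R]_n) (q : 'cV[R]_n) (r : R)
  (x : 'cV[R]_n) : R :=
  r^-1 * (\sum_(i < n) ((posp (x i 0)) `^ r * (posp (affF M q x i 0)) `^ r)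
          + \sum_(i < n) `|negp (x i 0)| `^ r
          + \sum_(i < n) `|negp (affF M q x i 0)| `^ r).

Definition l0norm (R : realType) (n : nat) (x : 'cV[R]_n) : nat :=
  #|[set i : 'I_n | x i 0 != 0]|.

Definition sparse_set (R : realType) (n s : nat) : set 'cV[R]_n :=
  [set x : 'cV[R]_n | (l0norm x <= s)%N].

Definition sol (R : realType) (n : nat) (M : 'M[R]_n) (q : 'cV[R]_n)
  : set 'cV[R]_n :=
  [set x : 'cV[R]_n | (forall i, 0 <= x i 0) /\ (forall i, 0 <= affF M q x i 0)
           /\ \sum_(i < n) x i 0 * affF M q x i 0 = 0].

Definition principal_submx (R : realType) (n : nat) (M : 'M[R]_n)
  (I : {set 'I_n}) : 'M[R]_#|I| :=
  \matrix_(i < #|I|, j < #|I|) M (enum_val i) (enum_val j).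

Definition Ps_matrix (R : realType) (n s : nat) (M : 'M[R]_n) : Prop :=
  forall I : {set 'I_n}, (0 < #|I|)%N -> (#|I| <= s)%N ->
    0 < \det (principal_submx M I).

Definition level_set (R : realType) (n s : nat) (M : 'M[R]_n) (q : 'cV[R]_n)
  (r gamma : R) : set 'cV[R]_n :=
  [set x : 'cV[R]_n | @sparse_set R n s x /\ f_r M q r x <= gamma].

Definition argmin_S (R : realType) (n s : nat) (M : 'M[R]_n) (q : 'cV[R]_n)
  (r : R) : set 'cV[R]_n :=
  [set x : 'cV[R]_n | @sparse_set R n s x /\
           forall y, @sparse_set R n s y -> f_r M q r x <= f_r M q r y].

(* Main.v *)
Require Import Defs.
From HB Require Import structures.
From mathcomp Require Import all_boot all_order all_algebra.
From mathcomp Require Import all_classical all_reals all_analysis.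
From mathcomp Require Import lra.
Import Order.TTheory GRing.Theory Num.Theory.
Import numFieldNormedType.Exports.
Local Open Scope classical_set_scope.
Local Open Scope ring_scope.

Lemma bnd_of (R : realType) (n : nat) (A : set 'cV[R]_n) (B : R) :
  (forall x, A x -> forall i, `|x i 0| <= B) -> bounded_set A.
Proof.
move=> HB.
have B0 : forall x, A x -> `|x| <= Num.max B 0.
  move=> x Ax; change (mx_norm x <= Num.max B 0); rewrite mx_normrE.
  apply: bigmax_le => [|ij _]; first by rewrite le_max lexx orbT.
  case: ij => i j /=; rewrite (ord1 j).
  by rewrite le_max HB.
rewrite /bounded_near; exists (Num.max B 0); split; first exact: num_real.
by move=> M HM x Ax; apply: le_trans (B0 x Ax) (ltW HM).
Qed.

Lemma term_le_sum (R : realType) (I : finType) (F : I -> R) (i : I) :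
  (forall j, 0 <= F j) -> F i <= \sum_j F j.
Proof. by move=> H; rewrite (bigD1 i) //= lerDl sumr_ge0. Qed.

Lemma pow_bound (R : realType) (u c r : R) :
  0 <= u -> 1 <= r -> u `^ r <= c -> u <= 1 + c.
Proof.
move=> u0 r1 hc.
have c0 : 0 <= c := le_trans (powR_ge0 _ _) hc.
have [u1|u1] := leP u 1; first by rewrite (le_trans u1) // lerDl.
have uc : u <= c.
  apply: le_trans hc; rewrite -{1}(powRr1 u0); apply: ler_powR => //; exact: ltW.
by rewrite (le_trans uc) // lerDr.
Qed.

Lemma posp_ge0 (R : realType) (a : R) : 0 <= posp a.
Proof. by rewrite /posp le_max lexx orbT. Qed.

Lemma f_terms (R : realType) (n : nat) (M : 'M[R]_n) (q : 'cV[R]_n) (r g : R)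
  (x : 'cV[R]_n) : 2 <= r -> f_r M q r x <= g -> forall i,
  [/\ `|negp (x i 0)| <= 1 + r * g, `|negp (affF M q x i 0)| <= 1 + r * g &
      posp (x i 0) * posp (affF M q x i 0) <= 1 + r * g].
Proof.
move=> r2 hf i.
have r0 : 0 < r by apply: lt_le_trans r2.
have r1 : 1 <= r by apply: le_trans r2; rewrite ler1n.
rewrite /f_r in hf.
set S1 := (X in r^-1 * (X + _ + _) <= _) in hf.
set S2 := (X in r^-1 * (_ + X + _) <= _) in hf.
set S3 := (X in r^-1 * (_ + _ + X) <= _) in hf.
have hS : S1 + S2 + S3 <= r * g.
  by move: hf; rewrite ler_pdivrMl.
have h1 : forall j, 0 <= posp (x j 0) `^ r * posp (affF M q x j 0) `^ r.
  by move=> j; rewrite mulr_ge0 // powR_ge0.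
have h2 : forall j, 0 <= `|negp (x j 0)| `^ r by move=> j; exact: powR_ge0.
have h3 : forall j, 0 <= `|negp (affF M q x j 0)| `^ r by move=> j; exact: powR_ge0.
have S10 : 0 <= S1 by apply: sumr_ge0.
have S20 : 0 <= S2 by apply: sumr_ge0.
have S30 : 0 <= S3 by apply: sumr_ge0.
split; apply: (@pow_bound R _ _ r _ r1).
- by [].
- apply: le_trans _ hS; apply: (le_trans (term_le_sum _ _ _ i h2)).
  apply: (le_trans (lexx S2)); lra.
- by [].
- apply: le_trans _ hS; apply: (le_trans (term_le_sum _ _ _ i h3)).
  apply: (le_trans (lexx S3)); lra.
- by rewrite mulr_ge0 // posp_ge0.
- rewrite powRM ?posp_ge0 //; apply: le_trans _ hS; apply: (le_trans (term_le_sum _ _ _ i h1)).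
  apply: (le_trans (lexx S1)); lra.
Qed.

Lemma level_bound (R : realType) (n s : nat) (M : 'M[R]_n) (q : 'cV[R]_n)
  (r g : R) : Ps_matrix s M -> 2 <= r -> 0 <= g ->
  exists B, forall x, level_set s M q r g x -> forall i, `|x i 0| <= B.
Proof.
move=> HP r2 g0.
have r0 : 0 < r by apply: lt_le_trans r2.
pose a := 1 + r * g.
have a1 : 1 <= a by rewrite /a lerDl mulr_ge0 // ltW.
have a0 : 0 <= a by apply: le_trans a1.
pose Q := \sum_i `|q i 0|.
pose Ms := \sum_i \sum_j `|M i j|.
pose W := a + Q + Ms * a.
pose K := \sum_(B : {set 'I_n}) \sum_(k < #|B|) \sum_(l < #|B|)
   `|invmx (principal_submx M B) k l|.
have Q0 : 0 <= Q by apply: sumr_ge0.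
have Ms0 : 0 <= Ms by apply: sumr_ge0 => i _; apply: sumr_ge0.
have W0 : 0 <= W by have := mulr_ge0 Ms0 a0; rewrite /W; lra.
have K0 : 0 <= K by apply: sumr_ge0 => B _; apply: sumr_ge0 => k _; apply: sumr_ge0.
exists (a + K * W) => x [Sx hf] i.
have T := @f_terms R n M q r g x r2 hf.
have hlow : forall j, - a <= x j 0.
  move=> j; have [T1 _ _] := T j.
  have : negp (x j 0) <= x j 0 by rewrite /negp ge_min lexx.
  move: T1; rewrite ler_norml => /andP[h _] h'; exact: le_trans h h'.
have hsmall : forall j, x j 0 < 1 -> `|x j 0| <= a.
  move=> j hj; rewrite ler_norml hlow /=; apply: le_trans a1; exact: ltW.
have hFbig : forall j, 1 <= x j 0 -> `|affF M q x j 0| <= a.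
  move=> j hj; have [_ T2 T3] := T j.
  have px : posp (x j 0) = x j 0 by rewrite /posp max_l //; apply: le_trans hj.
  rewrite px in T3.
  have pF : posp (affF M q x j 0) <= a.
    apply: le_trans T3; rewrite -{1}[posp _]mul1r; apply: ler_wpM2r => //.
    exact: posp_ge0.
  have hn : negp (affF M q x j 0) <= affF M q x j 0 by rewrite /negp ge_min lexx.
  have hp : affF M q x j 0 <= posp (affF M q x j 0) by rewrite /posp le_max lexx.
  move: T2; rewrite !ler_norml => /andP[h _].
  by rewrite (le_trans h hn) (le_trans hp pF).
have [xi1|xi1] := ltP (x i 0) 1.
  by apply: le_trans (hsmall i xi1) _; rewrite lerDl mulr_ge0.
pose bt := [set j | 1 <= x j 0]%SET.
have Hi : i \in bt by rewrite inE.
have hs : (#|bt| <= s)%N.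
  apply: leq_trans Sx.
  have -> : l0norm x = #|[pred j | x j 0 != 0]|.
    apply: eq_card => j; rewrite !inE /=; apply/idP/idP; rewrite in_setE /= //.
  apply: subset_leq_card; apply/fintype.subsetP => j; rewrite inE => hj /=.
  apply/eqP => e; move: hj; rewrite e; lra.
have h0 : (0 < #|bt|)%N by apply/card_gt0P; exists i.
pose A := principal_submx M bt.
have uA : A \in unitmx by rewrite unitmxE unitfE lt0r_neq0 // HP.
pose ev := @enum_val _ (mem bt).
pose z := \col_k x (ev k) 0.
pose w := \col_k (affF M q x (ev k) 0 - q (ev k) 0
             - \sum_(j | j \notin bt) M (ev k) j * x j 0).
have hAz : A *m z = w.
  apply/matrixP => k l; rewrite /A /z /w /principal_submx /affF !mxE.
  under eq_bigr do rewrite !mxE.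
  rewrite addrK (bigID (fun j => j \in bt)) /= addrK.
  rewrite (eq_bigl (fun j => j \in bt)) // [RHS]big_enum_val.
  by apply: eq_bigr.
have hz : z = invmx A *m w by rewrite -hAz mulKmx.
have exi : x i 0 = z (enum_rank_in Hi i) 0 by rewrite mxE /ev enum_rankK_in.
have hw : forall l, `|w l 0| <= W.
  move=> l; rewrite mxE.
  have hl : ev l \in bt := enum_valP l.
  have F1 : `|affF M q x (ev l) 0| <= a by apply: hFbig; move: hl; rewrite inE.
  have q1 : `|q (ev l) 0| <= Q.
    exact: (term_le_sum _ _ (fun j => `|q j 0|) (ev l) (fun _ => normr_ge0 _)).
  have s1 : `|\sum_(j | j \notin bt) M (ev l) j * x j 0| <= Ms * a.
    apply: le_trans (ler_norm_sum _ _ _) _.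
    apply: (@le_trans _ _ (\sum_(j | j \notin bt) `|M (ev l) j| * a)).
      apply: ler_sum => j hj; rewrite normrM ler_wpM2l // hsmall //.
      by move: hj; rewrite inE -ltNge.
    rewrite -mulr_suml ler_wpM2r //.
    apply: (@le_trans _ _ (\sum_j `|M (ev l) j|)).
      rewrite big_mkcond /=; apply: ler_sum => j _; case: ifP => //.
    exact: (term_le_sum _ _ (fun i => \sum_j `|M i j|) (ev l)
              (fun _ => sumr_ge0 _ (fun _ _ => normr_ge0 _))).
  have e1 := ler_normB (affF M q x (ev l) 0 - q (ev l) 0)
                       (\sum_(j | j \notin bt) M (ev l) j * x j 0).
  have e2 := ler_normB (affF M q x (ev l) 0) (q (ev l) 0).
  rewrite /W; lra.
rewrite exi hz mxE.
apply: le_trans (ler_norm_sum _ _ _) _.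
apply: (@le_trans _ _ (\sum_l `|invmx A (enum_rank_in Hi i) l| * W)).
  by apply: ler_sum => l _; rewrite normrM ler_wpM2l.
rewrite -mulr_suml.
have hK : \sum_l `|invmx A (enum_rank_in Hi i) l| <= K.
  apply: le_trans (term_le_sum _ _ (fun k' => \sum_l `|invmx A k' l|)
     (enum_rank_in Hi i) (fun _ => sumr_ge0 _ (fun _ _ => normr_ge0 _))) _.
  exact: (term_le_sum _ _ (fun B : {set 'I_n} => \sum_(k < #|B|) \sum_(l < #|B|)
     `|invmx (principal_submx M B) k l|) bt
     (fun _ => sumr_ge0 _ (fun _ _ => sumr_ge0 _ (fun _ _ => normr_ge0 _)))).
have := ler_wpM2r W0 hK; lra.
Qed.

Lemma f_ge0 (R : realType) (n : nat) (M : 'M[R]_n) (q : 'cV[R]_n) (r : R)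
  (x : 'cV[R]_n) : 0 < r -> 0 <= f_r M q r x.
Proof.
move=> r0; rewrite /f_r mulr_ge0 ?invr_ge0 ?(ltW r0) //.
by rewrite !addr_ge0 // sumr_ge0 // => i _; rewrite ?mulr_ge0 ?powR_ge0.
Qed.

Lemma f_sol (R : realType) (n : nat) (M : 'M[R]_n) (q : 'cV[R]_n) (r : R)
  (x : 'cV[R]_n) : 0 < r -> sol M q x -> f_r M q r x = 0.
Proof.
move=> r0 [hx [hF hs]].
have r0' : r != 0 by rewrite gt_eqF.
have hprod : forall i, x i 0 * affF M q x i 0 = 0.
  move=> i; move/eqP: hs; rewrite psumr_eq0 => [/allP H|j _]; last by rewrite mulr_ge0.
  by apply/eqP; apply: H; rewrite mem_index_enum.
rewrite /f_r.
rewrite big1 => [|i _]; last first.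
  rewrite /posp !max_l // -powRM // hprod powR0 //.
rewrite big1 => [|i _]; last by rewrite /negp min_r // normr0 powR0.
rewrite big1 => [|i _]; last by rewrite /negp min_r // normr0 powR0.
by rewrite !addr0 mulr0.
Qed.

Theorem theorem4p4 (R : realType) (n s : nat) (M : 'M[R]_n) (q : 'cV[R]_n)
  (r : R) :
  Ps_matrix s M -> 2 <= r ->
  (forall gamma : R, 0 <= gamma -> bounded_set (level_set s M q r gamma)) /\
  (sol M q `&` @sparse_set R n s `<=` argmin_S s M q r) /\
  bounded_set (sol M q `&` @sparse_set R n s) /\
  bounded_set (argmin_S s M q r).
Proof.
move=> HP r2.
have r0 : 0 < r by apply: lt_le_trans r2.
have lev : forall g, 0 <= g -> exists B, forall x, level_set s M q r g x ->
    forall i, `|x i 0| <= B.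
  by move=> g g0; apply: level_bound.
have sub : sol M q `&` @sparse_set R n s `<=` argmin_S s M q r.
  move=> x [hx hS]; split => // y _; rewrite f_sol //; exact: f_ge0.
split; first by move=> g g0; have [B HB] := lev g g0; exact: (@bnd_of R n _ B).
split; first exact: sub.
split.
  have [B HB] := lev 0 (lexx 0).
  apply: (@bnd_of R n _ B) => x [hx hS]; apply: HB; split => //.
  by rewrite f_sol.
have [[x0 hx0]|nx] := pselect (exists x0, argmin_S s M q r x0).
  have [B HB] := lev _ (@f_ge0 R n M q r x0 r0).
  apply: (@bnd_of R n _ B) => x hx; apply: HB; split; first by case: hx.
  by case: hx => _ /(_ x0 (proj1 hx0)).
apply: (@bnd_of R n _ 0) => x hx; exfalso; apply: nx; by exists x.
Qed.
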